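(* Let $FAF=\langle\mathcal A,\rho\rangle$ be a fuzzy argumentation framework and $E\subseteq\mathcal A$. For every $C\subseteq\mathcal A$: $E\in\mathcal{PE}(FAF,C)$ if and only if for every $S\in SCCS_{FAF}$, $$E\cap S\in\mathcal{PE}\big(FAF\downarrow_{R_{FAF}(S,E)},\,D_{FAF}(S,E)\cap C\big).$$
   Context: Fuzzy sets: a fuzzy set on a crisp set $X$ is a map $S:X\to[0,1]$; $S\subseteq S'$ means $S(x)\le S'(x)$ for all $x$; $\cap,\cup$ are pointwise $\min,\max$; $\mathrm{Supp}(S)=\{x:S(x)>0\}$. A fuzzy point $(x,a)$, $a\in(0,1]$, has value $a$ at $x$ and $0$ elsewhere; $(x,a)\in S$ means $a\le S(x)$. $a*b=\min\{a,b\}$. A fuzzy argumentation framework (FAF) is $\langle\mathcal A,\rho\rangle$ with $\mathrm{Args}$ a crisp set, $\mathcal A$ a fuzzy set on $\mathrm{Args}$, $\rho:\mathrm{Args}\times\mathrm{Args}\to[0,1]$, $\rho_{AB}=\rho(A,B)$; $A$ attacks $B$ iff $\rho_{AB}>0$. Fuzzy arguments are fuzzy points $(A,a)\in\mathcal A$. An attack of $(A,a)$ on $(B,b)$ is tolerable if $\min\{a,\rho_{AB}\}+b\le1$, sufficient otherwise. $(A,a)$ weakens $(B,b)$ to $(B,b')$, $b'=\min\{1-\min\{a,\rho_{AB}\},b\}$. $T\subseteq\mathcal A$ weakening defends $(C,c)$ if for every fuzzy argument $(B,b)$ sufficiently attacking $(C,c)$ there is $(A',a')\in T$ weakening $(B,b)$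 to some $(B,b')$ which tolerably attacks $(C,c)$. $T$ is conflict-free if no $(A,a),(B,b)\in T$ with $(A,a)$ sufficiently attacking $(B,b)$; admissible if conflict-free and it weakening defends every element of $T$. For $C\subseteq\mathcal A$: $\mathcal{AE}(FAF,C)$ is the set of admissible $E$ with $E\subseteq C$; $\mathcal{PE}(FAF,C)$ (preferred extensions in $C$) is the set of maximal elements of $\mathcal{AE}(FAF,C)$ with respect to $\subseteq$. Path-equivalence on $\mathrm{Args}$: $A\sim B$ iff $A=B$ or there are chains of attacks from $A$ to $B$ and from $B$ to $A$. $SCC_{FAF}(A)$ is the fuzzy set with value $\mathcal A(B)$ at each $B\sim A$, $0$ elsewhere; $SCCS_{FAF}$ is the set of these. $outparents_{FAF}(S)$ is the fuzzy set of $(B,\mathcal A(B))$ with $B\notin\mathrm{Supp}(S)$ attacking some argument of $\mathrm{Supp}(S)$. For $T\subseteq\mathcal A$, $FAF\downarrow_T=\langle T,\rho|_{\mathrm{Supp}(T)\times\mathrm{Supp}(T)}\rangle$, and notions in $FAF\downarrow_T$ refer to its own fuzzy arguments and attacks. For $E\subseteq\mathcal A$, $S\in SCCS_{FAF}$: $L_{FAF}(S,E)(A)=\max_B\big((E\cap outparents_{FAF}(S))(B)*\rho_{BA}\big)$ for $A\in\mathrm{Supp}(S)$, $0$ elsewhere; $R_{FAF}(S,E)(A)=\min\{\mathcal A(A),1-L_{FAF}(S,E)(A)\}$ for $A\in\mathrm{Supp}(S)$, $0$ elsewhere; $D_{FAF}(S,E)$ is the union of fuzzy points $(A,a)\in R_{FAF}(S,E)$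 such that for every $(B,b)\in outparents_{FAF}(S)$ sufficiently attacking $(A,a)$ there is $(C,c)\in E$ weakening $(B,b)$ to some $(B,b')$ which tolerably attacks $(A,a)$. *)

(* Defs.v *)
(* Stdlib reals (R) for membership degrees; MathComp finType for the
   (finite) crisp set Args, needed for the max in L_FAF. *)
From Stdlib Require Import Reals Relations ClassicalEpsilon.
From mathcomp Require Import ssreflect ssrfun ssrbool eqtype fintype bigop.

Set Implicit Arguments.
Unset Strict Implicit.

Local Open Scope R_scope.

Section FAF.
Variable Args : finType.

Definition pif (P : Prop) (a b : R) : R :=
  if excluded_middle_informative P then a else b.

Definition fuzzy_set (S : Args -> R) : Prop := forall x, 0 <= S x <= 1.
Definition fsub (S S' : Args -> R) : Prop := forall x, S x <= S' x.
Definition fcap (S S' : Args -> R) : Args -> R := fun x => Rmin (S x) (S' x).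
Definition Supp (S : Args -> R) (x : Args) : Prop := 0 < S x.

Definition fpoint_in (S : Args -> R) (x : Args) (a : R) : Prop :=
  0 < a <= 1 /\ a <= S x.

Definition is_FAF (Af : Args -> R) (rho : Args -> Args -> R) : Prop :=
  fuzzy_set Af /\ forall x y, 0 <= rho x y <= 1.

Definition attacks (rho : Args -> Args -> R) (x y : Args) : Prop := 0 < rho x y.

Definition sufficient_att (rho : Args -> Args -> R) x a y b : Prop :=
  attacks rho x y /\ Rmin a (rho x y) + b > 1.
Definition tolerable_att (rho : Args -> Args -> R) x a y b : Prop :=
  attacks rho x y /\ Rmin a (rho x y) + b <= 1.

Definition weaken (rho : Args -> Args -> R) x a y b : R :=
  Rmin (1 - Rmin a (rho x y)) b.

Definition weak_defends (Af : Args -> R) (rho : Args -> Args -> R)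
  (T : Args -> R) (z : Args) (c : R) : Prop :=
  forall y b, fpoint_in Af y b -> sufficient_att rho y b z c ->
    exists x a, fpoint_in T x a /\
      tolerable_att rho y (weaken rho x a y b) z c.

Definition conflict_free (rho : Args -> Args -> R) (T : Args -> R) : Prop :=
  ~ exists x a y b, fpoint_in T x a /\ fpoint_in T y b /\
      sufficient_att rho x a y b.

Definition admissible (Af : Args -> R) (rho : Args -> Args -> R)
  (T : Args -> R) : Prop :=
  fuzzy_set T /\ fsub T Af /\ conflict_free rho T /\
  forall z c, fpoint_in T z c -> weak_defends Af rho T z c.

Definition AE (Af : Args -> R) (rho : Args -> Args -> R) (C E : Args -> R) : Prop :=
  admissible Af rho E /\ fsub E C.

Definition PE (Af : Args -> R) (rho : Args -> Args -> R) (C E : Args -> R) : Prop :=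
  AE Af rho C E /\ forall E', AE Af rho C E' -> fsub E E' -> fsub E' E.

Definition path_equiv (rho : Args -> Args -> R) (x y : Args) : Prop :=
  x = y \/ (clos_trans Args (attacks rho) x y /\ clos_trans Args (attacks rho) y x).

Definition SCC (Af : Args -> R) (rho : Args -> Args -> R) (x : Args) : Args -> R :=
  fun y => pif (path_equiv rho y x) (Af y) 0.

Definition is_SCC (Af : Args -> R) (rho : Args -> Args -> R) (S : Args -> R) : Prop :=
  exists x, S = SCC Af rho x.

Definition outparents (Af : Args -> R) (rho : Args -> Args -> R) (S : Args -> R) :
  Args -> R :=
  fun y => pif (~ Supp S y /\ exists x, Supp S x /\ attacks rho y x) (Af y) 0.

(* restriction FAF|_T = <T, rho restricted to Supp T x Supp T> *)
Definition restrict (rho : Args -> Args -> R) (T : Args -> R) : Args -> Args -> R :=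
  fun x y => pif (Supp T x /\ Supp T y) (rho x y) 0.

Definition L_FAF (Af : Args -> R) (rho : Args -> Args -> R) (S E : Args -> R) :
  Args -> R :=
  fun x => pif (Supp S x)
    (\big[Rmax/0]_(y : Args) Rmin (fcap E (outparents Af rho S) y) (rho y x)) 0.

Definition R_FAF (Af : Args -> R) (rho : Args -> Args -> R) (S E : Args -> R) :
  Args -> R :=
  fun x => pif (Supp S x) (Rmin (Af x) (1 - L_FAF Af rho S E x)) 0.

(* union of fuzzy points: pointwise supremum of the degrees
   (0 if there is no point at that argument) *)
Lemma sup01_bound (P : R -> Prop) :
  bound (fun a => a = 0 \/ (0 < a <= 1 /\ P a)).
Proof.
exists 1; intros a [->|[[_ H] _]]; [left; exact Rlt_0_1| exact H].
Qed.

Lemma sup01_ne (P : R -> Prop) : exists a, a = 0 \/ (0 < a <= 1 /\ P a).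
Proof. exists 0; left; reflexivity. Qed.

Definition sup01 (P : R -> Prop) : R :=
  proj1_sig (completeness _ (sup01_bound P) (sup01_ne P)).

Definition fuzzy_union (P : Args -> R -> Prop) : Args -> R :=
  fun x => sup01 (P x).

Definition D_FAF (Af : Args -> R) (rho : Args -> Args -> R) (S E : Args -> R) :
  Args -> R :=
  fuzzy_union (fun x a =>
    fpoint_in (R_FAF Af rho S E) x a /\
    forall y b, fpoint_in (outparents Af rho S) y b -> sufficient_att rho y b x a ->
      exists z c, fpoint_in E z c /\
        tolerable_att rho y (weaken rho z c y b) x a).

End FAF.

(* Main.v *)
Require Import Defs.
From Stdlib Require Import Reals Lra Classical ClassicalEpsilon FunctionalExtensionality Relations.
From mathcomp Require Import ssreflect ssrfun ssrbool eqtype ssrnat seq fintype bigop finset.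

Local Open Scope R_scope.

Ltac rmm := unfold Rmin, Rmax in *;
  repeat match goal with
  | |- context[Rle_dec ?a ?b] => destruct (Rle_dec a b)
  | H: context[Rle_dec ?a ?b] |- _ => destruct (Rle_dec a b)
  end; lra.

Lemma pif_T (P : Prop) a b : P -> pif P a b = a.
Proof. move=> p; rewrite /pif; case: excluded_middle_informative => //. Qed.
Lemma pif_F (P : Prop) a b : ~ P -> pif P a b = b.
Proof. move=> p; rewrite /pif; case: excluded_middle_informative => //. Qed.

Section Big.
Variable T : eqType.
Variable F : T -> R.

Lemma bigmax_ge_s (s : seq T) j : j \in s -> F j <= \big[Rmax/0]_(i <- s) F i.
Proof.
elim: s => [//|a s IH]; rewrite inE big_cons => /orP [/eqP ->|/IH h].
  by apply Rmax_l.
by eapply Rle_trans; [exact h| apply Rmax_r].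
Qed.

Lemma bigmax_ge0_s (s : seq T) : 0 <= \big[Rmax/0]_(i <- s) F i.
Proof.
elim: s => [|a s IH]; rewrite ?big_nil ?big_cons; first lra.
eapply Rle_trans; [exact IH| apply Rmax_r].
Qed.

Lemma bigmax_le_s (s : seq T) u : 0 <= u -> (forall i, F i <= u) ->
  \big[Rmax/0]_(i <- s) F i <= u.
Proof.
move=> h0 h; elim: s => [|a s IH]; rewrite ?big_nil ?big_cons //.
by apply Rmax_lub.
Qed.

Lemma bigmax_cases_s (s : seq T) : \big[Rmax/0]_(i <- s) F i = 0 \/
   exists i, i \in s /\ \big[Rmax/0]_(i <- s) F i = F i.
Proof.
elim: s => [|a s IH]; rewrite ?big_nil ?big_cons; first by left.
have [h|h] := Rle_dec (F a) (\big[Rmax/0]_(j <- s) F j).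
  rewrite Rmax_right //. case: IH => [->|[i [hi ->]]]; first by left.
  by right; exists i; rewrite inE hi orbT.
rewrite Rmax_left; last lra. by right; exists a; rewrite inE eqxx.
Qed.

Lemma bigmin_le_s (s : seq T) j : j \in s -> \big[Rmin/1]_(i <- s) F i <= F j.
Proof.
elim: s => [//|a s IH]; rewrite inE big_cons => /orP [/eqP ->|/IH h].
  by apply Rmin_l.
by eapply Rle_trans; [apply Rmin_r|exact h].
Qed.

Lemma bigmin_cases_s (s : seq T) : \big[Rmin/1]_(i <- s) F i = 1 \/
   exists i, \big[Rmin/1]_(i <- s) F i = F i.
Proof.
elim: s => [|a s IH]; rewrite ?big_nil ?big_cons; first by left.
have [h|h] := Rle_dec (F a) (\big[Rmin/1]_(j <- s) F j).
  rewrite Rmin_left //. by right; exists a.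
rewrite Rmin_right; last lra. done.
Qed.
End Big.

Section Sup.
Variable P : R -> Prop.
Let mem a := a = 0 \/ (0 < a <= 1 /\ P a).

Lemma sup_lub : is_lub mem (sup01 P).
Proof. rewrite /sup01; case: completeness => //. Qed.

Lemma sup_ge a : 0 < a <= 1 -> P a -> a <= sup01 P.
Proof. move=> h1 h2; apply (proj1 sup_lub); right; tauto. Qed.

Lemma sup_ge0 : 0 <= sup01 P.
Proof. apply (proj1 sup_lub); by left. Qed.

Lemma sup_le u : 0 <= u -> (forall a, 0 < a <= 1 -> P a -> a <= u) -> sup01 P <= u.
Proof.
move=> h0 h; apply (proj2 sup_lub) => a [->|[h1 h2]] //; by apply h.
Qed.

Lemma sup_approx eps : 0 < eps -> exists a, mem a /\ sup01 P - eps < a.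
Proof.
move=> he; apply NNPP => hn.
have : sup01 P <= sup01 P - eps; last lra.
apply (proj2 sup_lub) => a ha.
apply Rnot_lt_le => hl; apply hn; by exists a.
Qed.
End Sup.

Set Implicit Arguments.
Unset Strict Implicit.
Local Open Scope R_scope.

Section Main.
Variable Args : finType.
Variables (Af : Args -> R) (rho : Args -> Args -> R).
Hypothesis HFAF : is_FAF Af rho.
Variable x0 : Args.

Notation S := (SCC Af rho x0).
Notation op := (outparents Af rho S).
Notation LL E := (L_FAF Af rho S E).
Notation RR E := (R_FAF Af rho S E).
Notation DD E := (D_FAF Af rho S E).

Lemma HAf y : 0 <= Af y <= 1. Proof. exact: (proj1 HFAF y). Qed.
Lemma Hrho y z : 0 <= rho y z <= 1. Proof. exact: (proj2 HFAF y z). Qed.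

Lemma S_supp y : Supp S y -> S y = Af y /\ path_equiv rho y x0.
Proof.
rewrite /Supp /SCC; have [p|p] := classic (path_equiv rho y x0).
  by rewrite !pif_T.
rewrite !pif_F //; lra.
Qed.

Lemma S_nsupp y : ~ Supp S y -> S y = 0.
Proof.
rewrite /Supp /SCC; have [p|p] := classic (path_equiv rho y x0).
  rewrite !pif_T // => h; have := HAf y; lra.
by rewrite !pif_F.
Qed.

Lemma S_intro y : path_equiv rho y x0 -> 0 < Af y -> Supp S y.
Proof. by move=> h1 h2; rewrite /Supp /SCC pif_T. Qed.

Definition cond y := ~ Supp S y /\ exists x, Supp S x /\ attacks rho y x.

Lemma op_T y : cond y -> op y = Af y.
Proof. move=> h; by rewrite /outparents pif_T. Qed.
Lemma op_F y : ~ cond y -> op y = 0.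
Proof. move=> h; by rewrite /outparents pif_F. Qed.
Lemma op_ge0 y : 0 <= op y.
Proof. have [h|h] := classic (cond y); [rewrite op_T //; apply HAf| rewrite op_F //; lra]. Qed.

Lemma S_ge0 y : 0 <= S y.
Proof.
have [h|h] := classic (Supp S y); [rewrite (proj1 (S_supp h)); apply HAf| rewrite S_nsupp //; lra].
Qed.

Lemma restrict_T T x y : Supp T x -> Supp T y -> restrict rho T x y = rho x y.
Proof. move=> h1 h2; rewrite /restrict pif_T //. Qed.

Lemma restrict_att T x y : attacks (restrict rho T) x y ->
  Supp T x /\ Supp T y /\ restrict rho T x y = rho x y.
Proof.
rewrite /attacks /restrict; have [p|p] := classic (Supp T x /\ Supp T y).
  by rewrite pif_T //; case: p.
rewrite pif_F //; lra.
Qed.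

Section WithE.
Variable E : Args -> R.
Hypothesis HE : fuzzy_set E.
Hypothesis HEA : fsub E Af.

Lemma fcapES_T y : Supp S y -> fcap E S y = E y.
Proof. move=> h; rewrite /fcap (proj1 (S_supp h)); have := HEA y; rmm. Qed.
Lemma fcapES_F y : ~ Supp S y -> fcap E S y = 0.
Proof. move=> h; rewrite /fcap (S_nsupp h); have := HE y; rmm. Qed.
Lemma fcapES_le y : fcap E S y <= E y.
Proof. rewrite /fcap; apply Rmin_l. Qed.

Definition Lbig y := \big[Rmax/0]_(z : Args) Rmin (fcap E op z) (rho z y).

Lemma L_T y : Supp S y -> LL E y = Lbig y.
Proof. move=> h; by rewrite /L_FAF pif_T. Qed.
Lemma L_F y : ~ Supp S y -> LL E y = 0.
Proof. move=> h; by rewrite /L_FAF pif_F. Qed.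

Lemma L_ge0 y : 0 <= LL E y.
Proof.
have [h|h] := classic (Supp S y); [rewrite L_T //; apply bigmax_ge0_s| rewrite L_F //; lra].
Qed.

Lemma L_le1 y : LL E y <= 1.
Proof.
have [h|h] := classic (Supp S y); [rewrite L_T //| rewrite L_F //; lra].
apply bigmax_le_s; first lra. move=> i; have := Hrho i y; rmm.
Qed.

Lemma L_ge z y : Supp S y -> cond z -> Rmin (E z) (rho z y) <= LL E y.
Proof.
move=> hy hz; rewrite L_T //.
have -> : E z = fcap E op z by rewrite /fcap op_T //; have := HEA z; rmm.
apply (bigmax_ge_s _ (fun z => Rmin (fcap E op z) (rho z y))).
apply mem_index_enum.
Qed.

Lemma L_pos y : 0 < LL E y -> Supp S y /\
  exists z, cond z /\ 0 < E z /\ Rmin (E z) (rho z y) = LL E y.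
Proof.
move=> hp.
have hy : Supp S y by apply NNPP => hn; rewrite L_F // in hp; lra.
split => //.
move: hp; rewrite L_T // /Lbig.
case: (bigmax_cases_s _ (fun z => Rmin (fcap E op z) (rho z y)) (index_enum Args)) => [->|[z [_ ->]]]; first lra.
move=> hp; exists z.
have hc : cond z.
  apply NNPP => hn; move: hp; rewrite /fcap op_F //; have := HE z; rmm.
split => //.
have e : fcap E op z = E z by rewrite /fcap op_T //; have := HEA z; rmm.
rewrite e in hp *; split => //. move: hp; rmm.
Qed.

Lemma R_T y : Supp S y -> RR E y = Rmin (Af y) (1 - LL E y).
Proof. move=> h; by rewrite /R_FAF pif_T. Qed.
Lemma R_F y : ~ Supp S y -> RR E y = 0.
Proof. move=> h; by rewrite /R_FAF pif_F. Qed.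
Lemma R_ge0 y : 0 <= RR E y.
Proof.
have [h|h] := classic (Supp S y); [rewrite R_T //| rewrite R_F //; lra].
have := HAf y; have := L_le1 y; rmm.
Qed.
Lemma R_le_Af y : RR E y <= Af y.
Proof.
have [h|h] := classic (Supp S y); [rewrite R_T //; apply Rmin_l| rewrite R_F //; apply HAf].
Qed.
Lemma R_le1 y : RR E y <= 1.
Proof. have := R_le_Af y; have := HAf y; lra. Qed.
Lemma R_le y : RR E y <= 1 - LL E y.
Proof.
have [h|h] := classic (Supp S y); [rewrite R_T //; apply Rmin_r| rewrite R_F // L_F //; lra].
Qed.
Lemma R_supp y : 0 < RR E y -> Supp S y.
Proof. move=> h; apply NNPP => hn; rewrite R_F // in h; lra. Qed.

Lemma weaken_le z c y b : weaken rho z c y b <= b.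
Proof. apply Rmin_r. Qed.

Lemma weaken_eq z c y b : b <= 1 - Rmin c (rho z y) -> weaken rho z c y b = b.
Proof. rewrite /weaken; rmm. Qed.

Lemma suff_tol y b x a : sufficient_att rho y b x a -> tolerable_att rho y b x a -> False.
Proof. move=> [_ h1] [_ h2]; lra. Qed.

Lemma tol_weaken_att z c y b x a : 0 < c -> b <= 1 ->
  sufficient_att rho y b x a -> tolerable_att rho y (weaken rho z c y b) x a ->
  attacks rho z y.
Proof.
move=> hc hb hs ht; apply NNPP => hn.
have h0 : rho z y = 0 by have := Hrho z y; rewrite /attacks in hn; lra.
move: ht; rewrite weaken_eq; last (rewrite h0; rmm).
by apply suff_tol.
Qed.


Lemma ER (cf : conflict_free rho E) w : Supp S w -> E w <= 1 - LL E w.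
Proof.
move=> hw.
have [hl|hl] := Rle_dec (LL E w) 0.
  have := L_ge0 w; have := HE w; lra.
have hl' : 0 < LL E w by lra.
have [_ [z [hz [hEz he]]]] := L_pos hl'.
apply Rnot_lt_le => hc; apply cf.
exists z, (E z), w, (E w).
split; first by split; [have := HE z; lra| lra].
split; first by split; [have := HE w; have := L_le1 w; lra| lra].
split; last by rewrite he; lra.
rewrite /attacks; move: he hl'; rmm.
Qed.

Lemma fcap_sub_R (cf : conflict_free rho E) : fsub (fcap E S) (RR E).
Proof.
move=> y; have [h|h] := classic (Supp S y).
  rewrite fcapES_T // R_T //; have := ER cf h; have := HEA y; rmm.
rewrite fcapES_F // R_F //; lra.
Qed.

Lemma restr_adm (adm : admissible Af rho E) :
  admissible (RR E) (restrict rho (RR E)) (fcap E S).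
Proof.
case: adm => _ [_ [cf def]].
split; first by move=> y; have := S_ge0 y; have := HE y; rewrite /fcap; rmm.
split; first exact: fcap_sub_R.
split.
  move=> [p [a [q [b [hp [hq [hs1 hs2]]]]]]].
  have [_ [_ e]] := restrict_att hs1.
  apply cf; exists p, a, q, b.
  move: hp hq; rewrite /fpoint_in /sufficient_att /attacks -e.
  have := fcapES_le p; have := fcapES_le q; rewrite /attacks in hs1; lra.
move=> x c hxc y b hyb [hs1 hs2].
have [hRy [hRx e]] := restrict_att hs1.
rewrite e in hs2.
have hs1' : attacks rho y x by rewrite /attacks -e.
have hxc' : fpoint_in E x c by move: hxc; rewrite /fpoint_in; have := fcapES_le x; lra.
have hyb' : fpoint_in Af y b by move: hyb; rewrite /fpoint_in; have := R_le_Af y; lra.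
have [z [a [hza ht]]] := def x c hxc' y b hyb' (conj hs1' hs2).
have hzy : attacks rho z y.
  apply: (tol_weaken_att (c:=a) _ _ (conj hs1' hs2) ht); [by case: hza => [[]]|by case: hyb' => [[]]].
have hSy : Supp S y by apply: (R_supp hRy).
have [hSz|hSz] := classic (Supp S z).
  have hfz : fpoint_in (fcap E S) z a by move: hza; rewrite /fpoint_in fcapES_T.
  have hRz : Supp (RR E) z.
    rewrite /Supp; have := fcap_sub_R cf z; case: hfz => [[? ?] ?]; lra.
  exists z, a; split => //.
  by rewrite /tolerable_att /weaken /attacks (restrict_T hRz hRy) (restrict_T hRy hRx).
exfalso.
have hc : cond z by split => //; exists y.
have hL := L_ge hSy hc.
have hb := R_le y.
move: ht; rewrite weaken_eq.
  by apply suff_tol; split.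
case: hza => [[? ?] ?]; case: hyb => [[? ?] ?]; move: hL; rmm.
Qed.

Definition Dcond x a := fpoint_in (RR E) x a /\
  (forall y b, fpoint_in op y b -> sufficient_att rho y b x a ->
    exists z c, fpoint_in E z c /\ tolerable_att rho y (weaken rho z c y b) x a).

Lemma D_eq x : DD E x = sup01 (Dcond x).
Proof. by []. Qed.

Lemma D_ge x a : Dcond x a -> a <= DD E x.
Proof. move=> h; rewrite D_eq; apply sup_ge => //; by case: h => [[]]. Qed.

Lemma D_ge0 x : 0 <= DD E x.
Proof. rewrite D_eq; apply sup_ge0. Qed.

Lemma D_le_R x : DD E x <= RR E x.
Proof. rewrite D_eq; apply sup_le; first exact: R_ge0. by move=> a _ [[_ h]]. Qed.

Lemma Dcond_down x a a' : Dcond x a -> 0 < a' <= a -> Dcond x a'.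
Proof.
move=> [[h1 h2] h3] [h4 h5]; split; first by split; lra.
move=> y b hyb [hs1 hs2].
have hs3 : Rmin b (rho y x) + a > 1 by lra.
have [z [c [hzc [ht1 ht2]]]] := h3 y b hyb (conj hs1 hs3).
exists z, c; split => //; split => //; lra.
Qed.

Lemma D_closed x a : 0 < a -> a <= DD E x -> Dcond x a.
Proof.
move=> ha hD.
have hR : a <= RR E x by have := D_le_R x; lra.
split; first by split; [split; [lra| have := R_le1 x; lra]| lra].
move=> y b hyb [hs1 hs2].
apply NNPP => hn.
pose t z := pif (0 < E z) (Rmin (weaken rho z (E z) y b) (rho y x)) 1.
pose M := \big[Rmin/1]_(z : Args) t z.
have hM : M + a > 1.
  rewrite /M; case: (bigmin_cases_s _ t (index_enum Args)) => [->|[z ->]]; first lra.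
  rewrite /t; have [p|p] := classic (0 < E z); last by rewrite pif_F //; lra.
  rewrite pif_T //; apply Rnot_le_lt => hl; apply hn.
  exists z, (E z); split; first by split; [split; [lra| have := HE z; lra]| lra].
  by split.
have hMz z c : fpoint_in E z c -> M <= Rmin (weaken rho z c y b) (rho y x).
  move=> [[hc1 hc2] hc3].
  apply: (Rle_trans _ (t z)); first by apply: bigmin_le_s; apply mem_index_enum.
  rewrite /t pif_T; last lra.
  rewrite /weaken; have := Hrho z y; rmm.
pose eps := Rmin (M + a - 1) (Rmin b (rho y x) + a - 1).
have heps : 0 < eps by rewrite /eps; rmm.
have [a1 [hm ha1]] := sup_approx (Dcond x) _ heps.
rewrite -D_eq in ha1.
have hyb1 : b <= 1 by case: hyb => [[]].
have ha1p : 0 < a1 by move: ha1 hD hyb1; rewrite /eps; rmm.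
case: hm => [?|[_ hd1]]; first lra.
have [hle|hlt] := Rle_dec a a1.
  apply hn; have [_ h] := Dcond_down hd1 (conj ha hle); apply h => //.
have hs' : sufficient_att rho y b x a1.
  split => //; move: ha1 hD; rewrite /eps; rmm.
have [z [c [hzc [_ ht]]]] := (proj2 hd1) y b hyb hs'.
have := hMz z c hzc; move: ha1 hD ht; rewrite /eps; rmm.
Qed.

Lemma outdef x f : 0 < f -> f <= DD E x -> Supp S x ->
  forall y b, fpoint_in Af y b -> ~ Supp S y -> sufficient_att rho y b x f ->
  exists z c, fpoint_in E z c /\ tolerable_att rho y (weaken rho z c y b) x f.
Proof.
move=> hf hD hx y b hyb hy hs.
have [_ h] := D_closed hf hD.
apply h => //.
have hc : cond y by split => //; exists x; split => //; case: hs.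
by rewrite /fpoint_in op_T.
Qed.

Lemma comb_def (F : Args -> R) (FR : fsub F (RR E))
  (Fdef : forall x f, fpoint_in F x f -> weak_defends (RR E) (restrict rho (RR E)) F x f)
  x f (hxf : fpoint_in F x f) y b (hyb : fpoint_in Af y b) (hy : Supp S y)
  (hs : sufficient_att rho y b x f) :
  exists z c, (fpoint_in F z c \/ (~ Supp S z /\ fpoint_in E z c)) /\
    tolerable_att rho y (weaken rho z c y b) x f.
Proof.
case: (hxf) => [[hf1 hf2] hf3]; case: (hyb) => [[hb1 hb2] hb3].
have hRx : Supp (RR E) x by rewrite /Supp; have := FR x; lra.
have hL0 := L_ge0 y.
have [hl|hl] := Rle_dec (LL E y) 0.
  have hRy : b <= RR E y by rewrite R_T //; move: hl; rmm.
  have hSRy : Supp (RR E) y by rewrite /Supp; lra.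
  have [z [c [hzc ht]]] : exists z c, fpoint_in F z c /\
      tolerable_att (restrict rho (RR E)) y (weaken (restrict rho (RR E)) z c y b) x f.
    apply: (Fdef x f hxf y b); first by split; [split; lra| lra].
    by rewrite /sufficient_att /attacks restrict_T.
  have hSRz : Supp (RR E) z by case: hzc => [[? ?] ?]; rewrite /Supp; have := FR z; lra.
  exists z, c; split; first by left.
  by move: ht; rewrite /tolerable_att /weaken /attacks !restrict_T.
have hl' : 0 < LL E y by lra.
have [_ [z0 [hc0 [hE0 he0]]]] := L_pos hl'.
pose b' := Rmin (1 - LL E y) b.
have hw0 : weaken rho z0 (E z0) y b = b' by rewrite /weaken he0.
case: hs => hs1 hs2.
have [ht|ht] := Rle_dec (Rmin b' (rho y x) + f) 1.
  exists z0, (E z0); split.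
    right; split; first by case: hc0.
    by split; [split; [lra| have := HE z0; lra]| lra].
  by rewrite hw0.
have hRy : b' <= RR E y by rewrite R_T // /b'; have := L_le1 y; rmm.
have hb'0 : 0 < b' by move: ht; have := Hrho y x; rmm.
have hSRy : Supp (RR E) y by rewrite /Supp; lra.
have [z [c [hzc ht2]]] : exists z c, fpoint_in F z c /\
    tolerable_att (restrict rho (RR E)) y (weaken (restrict rho (RR E)) z c y b') x f.
  apply: (Fdef x f hxf y b'); first by split; [split; [lra| rewrite /b'; rmm]| lra].
  rewrite /sufficient_att /attacks restrict_T //; split => //; lra.
have hSRz : Supp (RR E) z by case: hzc => [[? ?] ?]; rewrite /Supp; have := FR z; lra.
exists z, c; split; first by left.
move: ht2; rewrite /tolerable_att /weaken /attacks !restrict_T // => -[_ h].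
split => //. move: h ht; rewrite /b'; rmm.
Qed.


Lemma op_le_Af y : op y <= Af y.
Proof. have [h|h] := classic (cond y); [rewrite op_T //; lra| rewrite op_F //; apply HAf]. Qed.

Lemma fwd (C : Args -> R) (HC : fuzzy_set C) (pe : PE Af rho C E) :
  PE (RR E) (restrict rho (RR E)) (fcap (DD E) C) (fcap E S).
Proof.
case: pe => [[adm hEC] hmax].
have adm' := adm.
case: adm' => _ [_ [cf def]].
split.
  split; first exact: restr_adm.
  move=> w; have [hw|hw] := classic (Supp S w).
    rewrite fcapES_T //; apply Rmin_glb; last exact: hEC.
    have [h0|h0] := Rle_dec (E w) 0; first by have := D_ge0 w; lra.
    apply D_ge; split.
      split; first by split; [lra| have := HE w; lra].
      by have := fcap_sub_R cf w; rewrite fcapES_T.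
    move=> y b hyb hs; apply: (def w (E w)) => //.
      by split; [split; [lra| have := HE w; lra]| lra].
    by move: hyb; rewrite /fpoint_in; have := op_le_Af y; lra.
  rewrite fcapES_F //; apply Rmin_glb; [exact: D_ge0| by have := HC w; lra].
move=> F [[HFf [FR [Fcf Fdef]]] hFsub] hEF.
pose E' := fun w => pif (Supp S w) (F w) (E w).
have E'T w : Supp S w -> E' w = F w by move=> h; rewrite /E' pif_T.
have E'F w : ~ Supp S w -> E' w = E w by move=> h; rewrite /E' pif_F.
have hFD w : F w <= DD E w by have := hFsub w; rewrite /fcap; rmm.
have hFC w : F w <= C w by have := hFsub w; rewrite /fcap; rmm.
have hSR w : 0 < F w -> Supp (RR E) w by move=> h; rewrite /Supp; have := FR w; lra.
have hSS w : 0 < F w -> Supp S w by move=> h; apply: R_supp; have := FR w; lra.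
have hEE' : fsub E E'.
  move=> w; have [h|h] := classic (Supp S w).
    by rewrite E'T //; have := hEF w; rewrite fcapES_T //.
  rewrite E'F //; lra.
have hAE : AE Af rho C E'.
  split; last first.
    move=> w; have [h|h] := classic (Supp S w); [rewrite E'T //| rewrite E'F //].
  split.
    move=> w; have [h|h] := classic (Supp S w); [rewrite E'T //| rewrite E'F //].
  split.
    move=> w; have [h|h] := classic (Supp S w); [rewrite E'T //| rewrite E'F //].
    have := FR w; have := R_le_Af w; lra.
  split.
    move=> [p [a [q [b [[[ha1 ha2] ha3] [[[hb1 hb2] hb3] [hs1 hs2]]]]]]].
    have [hp|hp] := classic (Supp S p); have [hq|hq] := classic (Supp S q).
    - rewrite E'T // in ha3; rewrite E'T // in hb3.
      apply Fcf; exists p, a, q, b; do 2 (split; first by split; [split; lra| lra]).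
      have hp' : Supp (RR E) p by apply hSR; lra.
      have hq' : Supp (RR E) q by apply hSR; lra.
      by rewrite /sufficient_att /attacks (restrict_T hp' hq').
    - rewrite E'T // in ha3; rewrite E'F // in hb3.
      have hpa : fpoint_in Af p a by split; [split; lra| have := FR p; have := R_le_Af p; lra].
      have [z [c [hzc ht]]] := def q b (conj (conj hb1 hb2) hb3) p a hpa (conj hs1 hs2).
      have hzp : attacks rho z p.
        by apply: (tol_weaken_att (c:=c) _ _ (conj hs1 hs2) ht); case: hzc => [[]].
      case: hzc => [[hc1 hc2] hc3].
      have [hz|hz] := classic (Supp S z).
        apply Fcf; exists z, c, p, a.
        have hFz : c <= F z by have := hEF z; rewrite fcapES_T //; lra.
        split; first by split; [split; lra| lra].
        split; first by split; [split; lra| lra].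
        have hz' : Supp (RR E) z by apply hSR; lra.
        have hp' : Supp (RR E) p by apply hSR; lra.
        rewrite /sufficient_att /attacks (restrict_T hz' hp').
        split => //. case: ht => _; move: hs2; rewrite /weaken; rmm.
      have hc : cond z by split => //; exists p.
      have hL := L_ge hp hc.
      have hR := R_le p; have hFp := FR p.
      move: ht; rewrite weaken_eq.
        by move=> ht; apply: (suff_tol (conj hs1 hs2) ht).
      move: hL; rmm.
    - rewrite E'F // in ha3; rewrite E'T // in hb3.
      have hc : cond p by split => //; exists q.
      have hL := L_ge hq hc.
      have hR := R_le q; have := FR q.
      move: hs2 hL; rmm.
    - rewrite E'F // in ha3; rewrite E'F // in hb3.
      apply cf; exists p, a, q, b; do 2 (split; first by split; [split; lra| lra]).
      by split.
  move=> w e [[he1 he2] he3] y b hyb hs.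
  have [hw|hw] := classic (Supp S w); last first.
    rewrite E'F // in he3.
    have [z [c [[[hc1 hc2] hc3] ht]]] := def w e (conj (conj he1 he2) he3) y b hyb hs.
    exists z, c; split => //; split; [split; lra| have := hEE' z; lra].
  rewrite E'T // in he3.
  have [hy|hy] := classic (Supp S y).
    have [z [c [[hzc|[hz hzc]] ht]]] := comb_def FR Fdef (conj (conj he1 he2) he3) hyb hy hs.
      exists z, c; split => //; case: hzc => [[hc1 hc2] hc3].
      by split; [split; lra| rewrite E'T //; apply hSS; lra].
    exists z, c; split => //; case: hzc => [[hc1 hc2] hc3].
    by split; [split; lra| rewrite E'F //].
  have hD : e <= DD E w by have := hFD w; lra.
  have [z [c [[[hc1 hc2] hc3] ht]]] := outdef he1 hD hw hyb hy hs.
  exists z, c; split => //; split; [split; lra| have := hEE' z; lra].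
have hE'E := hmax E' hAE hEE'.
move=> w; have [h|h] := classic (Supp S w).
  rewrite fcapES_T //; have := hE'E w; rewrite E'T //.
rewrite fcapES_F // ; have := FR w; rewrite R_F //.
Qed.


Section Bwd.
Variable C : Args -> R.
Hypothesis HC : fuzzy_set C.
Hypothesis HS : PE (RR E) (restrict rho (RR E)) (fcap (DD E) C) (fcap E S).

Lemma HSsub : fsub (fcap E S) (fcap (DD E) C).
Proof. by case: HS => [[_ h] _]. Qed.

Lemma HSFR : fsub (fcap E S) (RR E).
Proof. by case: HS => [[[_ [h _]] _] _]. Qed.

Lemma bwd_C w : Supp S w -> E w <= C w.
Proof. move=> hw; have := HSsub w; rewrite fcapES_T // /fcap; rmm. Qed.

Lemma bwd_cf p a q b : fpoint_in E p a -> fpoint_in E q b -> Supp S q ->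
  sufficient_att rho p a q b -> False.
Proof.
case: HS => [[[_ [FR [Fcf _]]] _] _].
move=> [[ha1 ha2] ha3] [[hb1 hb2] hb3] hq [hs1 hs2].
have [hp|hp] := classic (Supp S p).
  apply Fcf; exists p, a, q, b.
  have hp' : Supp (RR E) p by rewrite /Supp; have := FR p; rewrite fcapES_T //; lra.
  have hq' : Supp (RR E) q by rewrite /Supp; have := FR q; rewrite fcapES_T //; lra.
  rewrite /fpoint_in !fcapES_T //.
  split; first by split; [split; lra| lra].
  split; first by split; [split; lra| lra].
  by rewrite /sufficient_att /attacks (restrict_T hp' hq').
have hc : cond p by split => //; exists q.
have hL := L_ge hq hc.
have hR := R_le q; have := FR q; rewrite fcapES_T //.
move: hs2 hL; rmm.
Qed.

Lemma bwd_def x c : fpoint_in E x c -> Supp S x ->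
  forall y b, fpoint_in Af y b -> sufficient_att rho y b x c ->
  exists z c', fpoint_in E z c' /\ tolerable_att rho y (weaken rho z c' y b) x c.
Proof.
case: HS => [[[_ [FR [Fcf Fdef]]] _] _].
move=> [[hc1 hc2] hc3] hx y b hyb hs.
have [hy|hy] := classic (Supp S y).
  have hxc : fpoint_in (fcap E S) x c by split; [split; lra| rewrite fcapES_T].
  have [z [c' [[hzc|[hz hzc]] ht]]] := comb_def FR Fdef hxc hyb hy hs.
    exists z, c'; split => //; case: hzc => [[? ?] ?].
    by split; [split; lra| have := fcapES_le z; lra].
  by exists z, c'.
have hD : c <= DD E x by have := HSsub x; rewrite fcapES_T // /fcap; rmm.
exact: (outdef hc1 hD hx hyb hy hs).
Qed.

End Bwd.

End WithE.

Lemma crt_cases (x y : Args) : clos_refl_trans Args (attacks rho) x y ->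
  x = y \/ clos_trans Args (attacks rho) x y.
Proof.
elim=> [a b h|a|a b c _ IH1 _ IH2].
- by right; constructor.
- by left.
- case: IH1 => [e1|h1]; case: IH2 => [e2|h2].
  + by left; subst.
  + by subst; right.
  + by subst; right.
  + by right; apply: t_trans h1 h2.
Qed.

Lemma bwd_max (E E' C : Args -> R) (HE : fuzzy_set E) (HEA : fsub E Af) (HC : fuzzy_set C)
  (HS : PE (RR E) (restrict rho (RR E)) (fcap (DD E) C) (fcap E S))
  (hAE : AE Af rho C E') (hEE' : fsub E E')
  (Hup : forall z, ~ Supp S z -> clos_trans Args (attacks rho) z x0 -> E' z <= E z) :
  forall w, Supp S w -> E' w <= E w.
Proof.
case: (hAE) => [adm' hE'C].
case: (adm') => [HE' [HE'A [cf' def']]].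
have eqz z : cond z -> E' z = E z.
  move=> [hz [s [hs hzs]]].
  have hzx : clos_trans Args (attacks rho) z x0.
    have [_ [e|[h _]]] := S_supp hs; first by rewrite -e; constructor.
    by apply: t_trans (t_step _ _ _ _ hzs) h.
  have := Hup z hz hzx; have := hEE' z; lra.
have hLeq y : LL E' y = LL E y.
  have [h|h] := classic (Supp S y); last by rewrite !L_F.
  rewrite !L_T // /Lbig; apply: eq_bigr => z _.
  have [hc|hc] := classic (cond z).
    by rewrite /fcap op_T // eqz.
  rewrite /fcap op_F //; have := HE z; have := HE' z; rmm.
have hR : RR E' = RR E.
  by apply functional_extensionality => y; rewrite /R_FAF hLeq.
have admS := restr_adm HE' HE'A adm'.
rewrite hR in admS.
have hsub : fsub (fcap E' S) (fcap (DD E) C).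
  move=> w; have [hw|hw] := classic (Supp S w); last first.
    rewrite fcapES_F //; apply Rmin_glb; [exact: D_ge0| by have := HC w; lra].
  rewrite fcapES_T //; apply Rmin_glb; last exact: hE'C.
  have [h0|h0] := Rle_dec (E' w) 0; first by have := D_ge0 E w; lra.
  apply: D_ge; split.
    split; first by split; [lra| have := HE' w; lra].
    by rewrite -hR; have := fcap_sub_R HE' HE'A cf' w; rewrite fcapES_T.
  move=> y b hyb hs.
  have hyb' : fpoint_in Af y b by move: hyb; rewrite /fpoint_in; have := op_le_Af y; lra.
  have hwe : fpoint_in E' w (E' w) by split; [split; [lra| have := HE' w; lra]| lra].
  have [z [c [hzc ht]]] := def' w (E' w) hwe y b hyb' hs.
  have hzy : attacks rho z y.
    by apply: (tol_weaken_att (c:=c) _ _ hs ht); [case: hzc => [[]]| case: hyb' => [[]]].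
  have hcy : cond y.
    apply NNPP => hn; move: hyb; rewrite /fpoint_in op_F //; lra.
  case: (hcy) => [hy [s [hs' hys]]].
  have hyx : clos_trans Args (attacks rho) y x0.
    have [_ [e|[h _]]] := S_supp hs'; first by rewrite -e; constructor.
    by apply: t_trans (t_step _ _ _ _ hys) h.
  have hz : ~ Supp S z.
    move=> hSz; apply hy; apply: S_intro; last first.
      by case: hyb => [[? ?] ?]; have := op_le_Af y; lra.
    right; split => //.
    have [_ hpe] := S_supp hSz.
    case: hpe => [e|[_ h]]; first by rewrite -e; constructor.
    by apply: t_trans h (t_step _ _ _ _ hzy).
  exists z, c; split => //.
  case: hzc => [[? ?] ?]; split; [split; lra|].
  have := Hup z hz (t_trans _ _ _ _ _ (t_step _ _ _ _ hzy) hyx); lra.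
case: HS => [_ hmax].
have h := hmax (fcap E' S) (conj admS hsub).
have hle : fsub (fcap E S) (fcap E' S) by move=> w; rewrite /fcap; have := hEE' w; rmm.
move=> w hw; have := h hle w; rewrite !fcapES_T //.
Qed.

End Main.

Theorem mainTheorem6 (Args : finType) (Af : Args -> R) (rho : Args -> Args -> R)
  (HFAF : is_FAF Af rho) (E : Args -> R) (HE : fuzzy_set E) (HEA : fsub E Af) :
  forall C : Args -> R, fuzzy_set C -> fsub C Af ->
    (PE Af rho C E <->
     forall S : Args -> R, is_SCC Af rho S ->
       PE (R_FAF Af rho S E) (restrict rho (R_FAF Af rho S E))
          (fcap (D_FAF Af rho S E) C) (fcap E S)).
Proof.
move=> C HC HCA; split.
  move=> pe S [x0 ->]; exact: (fwd HFAF x0 HE HEA HC pe).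
move=> H.
have HS x : PE (R_FAF Af rho (SCC Af rho x) E)
  (restrict rho (R_FAF Af rho (SCC Af rho x) E))
  (fcap (D_FAF Af rho (SCC Af rho x) E) C) (fcap E (SCC Af rho x)).
  by apply: H; exists x.
have hself x : 0 < Af x -> Supp (SCC Af rho x) x.
  by move=> h; apply: S_intro => //; left.
have adm : admissible Af rho E.
  split; first done. split; first done. split.
    move=> [p [a [q [b [hp [hq hs]]]]]].
    have hq' : Supp (SCC Af rho q) q.
      by apply: hself; case: hq => [[? ?] ?]; have := HEA q; lra.
    exact: (bwd_cf HEA (HS q) hp hq hq' hs).
  move=> x c hxc y b hyb hs.
  have hx' : Supp (SCC Af rho x) x.
    by apply: hself; case: hxc => [[? ?] ?]; have := HEA x; lra.
  exact: (bwd_def HFAF HE HEA (HS x) hxc hx' hyb hs).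
have hEC : fsub E C.
  move=> w; have [h|h] := Rle_dec (E w) 0; first by have := HC w; lra.
  apply: (bwd_C HEA (HS w)); apply: hself; have := HEA w; lra.
split; first by split.
move=> E' hAE hEE'.
pose pb (P : Prop) := if excluded_middle_informative P then true else false.
have pbP P : pb P = true <-> P.
  by rewrite /pb; case: excluded_middle_informative => p; split.
pose anc x := [set u | pb (clos_refl_trans Args (attacks rho) u x)].
have ancP u x : u \in anc x <-> clos_refl_trans Args (attacks rho) u x.
  by rewrite inE; apply pbP.
have hE'A : fsub E' Af by case: hAE => [[_ [h _]] _].
have key : forall n x, (#|anc x| < n)%N -> E' x <= E x.
  elim=> [//|n IH] x hx.
  have [h|h] := Rle_dec (E' x) (E x); first done.
  have hAfx : 0 < Af x by have := HE x; have := hE'A x; lra.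
  apply: (bwd_max HFAF HE HEA HC (HS x) hAE hEE' _ (hself x hAfx)).
  move=> z hz hzx.
  have [h'|h'] := Rle_dec (E' z) (E z); first done.
  have hAfz : 0 < Af z by have := HE z; have := hE'A z; lra.
  apply IH.
  have hpr : anc z \proper anc x.
    apply/properP; split.
      apply/subsetP => u /ancP hu; apply/ancP.
      apply: rt_trans hu (clos_t_clos_rt _ _ _ _ hzx).
    exists x; first by apply/ancP; apply rt_refl.
    apply/negP => /ancP hxz; case: (crt_cases hxz) => [e|hxz'].
      by apply hz; rewrite -e; apply: hself.
    apply hz; apply: S_intro => //; right; split => //.
  have hlt := proper_card hpr.
  exact: leq_trans hlt hx.
move=> x; apply: (key (#|anc x|).+1); exact: ltnSn.
Qed.
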